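(* Let $W=I_2(m)$, $m\ge3$, and let $\kappa^{(i)}_{\alpha,\beta},\kappa^{(i)}_{\beta,\alpha}$ ($1\le i\le m-2$) be the coefficients defined below. Put $D=\sum_{i=1}^{m-1}(-1)^i\big(\delta^{(m-i)}_{\alpha\ldots}+\delta^{(m-i)}_{\beta\ldots}\big)$. If $m$ is even, then $$X^{(m)}_{\alpha\ldots}=\sum_{i=1}^{m-2}(-1)^{m-i}\kappa^{(i)}_{\omega_i,\omega_{i+1}}X^{(i)}_{\omega_i\ldots}+y_{\Sigma^+}\big(\delta^{(m)}_{\alpha\ldots}+D+\mathbf 1\big),$$ $$X^{(m)}_{\beta\ldots}=\sum_{i=1}^{m-2}(-1)^{m-i}\kappa^{(i)}_{\omega_{i+1},\omega_i}X^{(i)}_{\omega_{i+1}\ldots}+y_{\Sigma^+}\big(\delta^{(m)}_{\beta\ldots}+D+\mathbf 1\big).$$ If $m$ is odd, then $$X^{(m)}_{\alpha\ldots}=\sum_{i=1}^{m-2}(-1)^{m-i}\kappa^{(i)}_{\omega_{i+1},\omega_i}X^{(i)}_{\omega_{i+1}\ldots}-y_{\Sigma^+}\big(\delta^{(m)}_{\alpha\ldots}+D-\mathbf 1\big),$$ $$X^{(m)}_{\beta\ldots}=\sum_{i=1}^{m-2}(-1)^{m-i}\kappa^{(i)}_{\omega_i,\omega_{i+1}}X^{(i)}_{\omega_i\ldots}-y_{\Sigma^+}\big(\delta^{(m)}_{\beta\ldots}+D-\mathbf 1\big).$$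
   Context: General setup: $W$ a finite real reflection group with root system $\Sigma$; $\mathcal{R}\subset\mathbb{R}$ the smallest subring containing all coefficients of roots in the basis of simple roots, with $\mathbb{Z}$-basis $B=(e_1=1,\dots,e_l)$; $R$ an integral domain containing $\mathcal{R}$; $F$ a one-dimensional commutative formal group law over $R$; $\Lambda$ the lattice spanned by $r\gamma$, $r\in\mathcal{R}$, $\gamma\in\Sigma$; $\mathcal{S}=R[[\Lambda]]/\mathcal{J}_F$ (completion of $R[x_\lambda:\lambda\in\Lambda]$ at the augmentation ideal, modulo the closed ideal generated by $x_0$ and $x_{e_i\gamma+e_j\gamma'}-((e_i\cdot_Fx_\gamma)+_F(e_j\cdot_Fx_{\gamma'}))$, where $e_i\cdot_F u=e_iu$), with $W$ acting by $w(x_\lambda)=x_{w(\lambda)}$; $\mathcal{Q}$ the localization of $\mathcal{S}$ at all $x_\gamma$; $\mathcal{Q}_W=\mathcal{Q}\otimes_RR[W]$ with left $\mathcal{Q}$-basis $\{\delta_w\}$ and product $(q\delta_w)(q'\delta_{w'})=q\,w(q')\delta_{ww'}$, $\mathbf 1=\delta_1$; $\delta_\gamma=\delta_{s_\gamma}$, $X_\gamma=\frac1{x_\gamma}(\mathbf 1-\delta_\gamma)$. Dihedral notation: $W=I_2(m)$ with simple roots $\alpha,\beta$; $\Sigma^+$ the positive roots; $y_\gamma=1/x_\gamma\in\mathcal{Q}$ and $y_{\Sigma^+}=\prod_{\gamma\in\Sigma^+}y_\gamma$. $X^{(i)}_{\alpha\ldots}=X_\alpha X_\beta X_\alpha\cdots$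 ($i$ alternating factors), $X^{(i)}_{\beta\ldots}=X_\beta X_\alpha\cdots$, similarly $\delta^{(i)}_{\alpha\ldots},\delta^{(i)}_{\beta\ldots}$ (products of $\delta_\alpha,\delta_\beta$) and $s^{(i)}_{\alpha\ldots},s^{(i)}_{\beta\ldots}$. $\omega_i=\alpha$ if $i$ is even and $\omega_i=\beta$ if $i$ is odd; $X^{(i)}_{\omega_i\ldots}$ means $X^{(i)}_{\alpha\ldots}$ or $X^{(i)}_{\beta\ldots}$ accordingly, and $\kappa^{(i)}_{\omega_i,\omega_{i+1}}$ means $\kappa^{(i)}_{\alpha,\beta}$ or $\kappa^{(i)}_{\beta,\alpha}$ accordingly. The elements $\kappa^{(i)}_{\alpha,\beta},\kappa^{(i)}_{\beta,\alpha}\in\mathcal{Q}$ ($1\le i\le m-2$) are the unique elements with $X^{(m)}_{\alpha\ldots}-X^{(m)}_{\beta\ldots}=\sum_{i=1}^{m-2}\big(\kappa^{(i)}_{\alpha,\beta}X^{(i)}_{\alpha\ldots}-\kappa^{(i)}_{\beta,\alpha}X^{(i)}_{\beta\ldots}\big)$. *)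

(* Defs.v *)
From HB Require Import structures.
From mathcomp Require Import all_boot all_order all_algebra.
Set Implicit Arguments. Unset Strict Implicit. Unset Printing Implicit Defensive.
Import Order.TTheory GRing.Theory Num.Theory.
Local Open Scope ring_scope.

(* Roots: Sigma = {gamma_j : j in Z/2m}, gamma_j = (cos(j pi/m),          *)
(*   positive roots Sigma^+ = {gamma_j : 0 <= j < m}.                     *)
(* W elements: (false, r) = rotation by 2 r pi / m  (gamma_j -> gamma_(j+2r))*)
(*             (true, r)  = reflection gamma_j -> gamma_(2r+m-j).          *)

Definition dihW (m : nat) := (bool * 'Z_m)%type.

Definition wone (m : nat) : dihW m := (false, 0).

Definition wmul (m : nat) (w v : dihW m) : dihW m :=
  (w.1 (+) v.1, if w.1 then w.2 - v.2 else w.2 + v.2).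

Definition root_ix (m : nat) := 'Z_(2 * m).

Definition wact (m : nat) (w : dihW m) (j : root_ix m) : root_ix m :=
  if w.1 then - j + ((2 * val w.2 + m)%N%:R : root_ix m)
  else j + ((2 * val w.2)%N%:R : root_ix m).

Definition srefl (m : nat) (k : root_ix m) : dihW m := (true, (val k)%:R).

Definition alpha_ix (m : nat) : root_ix m := 0.
Definition beta_ix (m : nat) : root_ix m := (m.-1)%:R.

Definition simple_ix (m : nat) (b : bool) : root_ix m :=
  if b then beta_ix m else alpha_ix m.

Section TwistedGroupAlgebra.
Variables (m : nat) (Q : comUnitRingType) (act : dihW m -> Q -> Q).

(* Q_W: left Q-module with basis delta_w, w in W; an element is the      *)
(* finite function w |-> coefficient of delta_w.                          *)
Definition QW := {ffun dihW m -> Q}.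

Definition qscale (q : Q) (f : QW) : QW := [ffun v => q * f v].

Definition delta (w : dihW m) : QW := [ffun v => (v == w)%:R].

Definition qwone : QW := delta (wone m).

(* (q delta_w)(q' delta_w') = q w(q') delta_(w w') *)
Definition qwmul (f g : QW) : QW :=
  [ffun u => \sum_(w : dihW m) \sum_(v : dihW m | wmul w v == u)
                f w * act w (g v)].

Fixpoint altprod (f : bool -> QW) (b : bool) (i : nat) : QW :=
  match i with
  | 0 => qwone
  | i'.+1 => qwmul (f b) (altprod f (~~ b) i')
  end.

Variable x : root_ix m -> Q.

Definition y_ (j : root_ix m) : Q := (x j)^-1.

Definition Xop (j : root_ix m) : QW :=
  qscale (y_ j) (qwone - delta (srefl j)).

Definition Xw (b : bool) (i : nat) : QW :=
  altprod (fun c => Xop (simple_ix m c)) b i.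

Definition deltaw (b : bool) (i : nat) : QW :=
  altprod (fun c => delta (srefl (simple_ix m c))) b i.

Definition ySigmaPlus : Q := \prod_(j : root_ix m | (val j < m)%N) y_ j.

Definition Dsum : QW :=
  \sum_(1 <= i < m) qscale ((-1) ^+ i) (deltaw false (m - i) + deltaw true (m - i)).

End TwistedGroupAlgebra.

(* Main.v *)
Require Import Defs.
From HB Require Import structures.
From mathcomp Require Import all_boot all_order all_algebra.
From mathcomp Require Import ring zify.
Set Implicit Arguments. Unset Strict Implicit. Unset Printing Implicit Defensive.
Import GRing.Theory.
Local Open Scope ring_scope.

Section Group.
Variable m : nat.
Hypothesis hm : (3 <= m)%N.

Definition winv (w : dihW m) : dihW m := if w.1 then w else (false, - w.2).

Lemma wmulA : associative (@wmul m).
Proof.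
case=> [[] a] [[] b] [[] c]; rewrite /wmul /=; congr pair; ring.
Qed.

Lemma wmul1w w : wmul (wone m) w = w.
Proof. by case: w => [[] a]; rewrite /wmul /= add0r. Qed.
Lemma wmulw1 w : wmul w (wone m) = w.
Proof. by case: w => [[] a]; rewrite /wmul /= ?subr0 ?addr0 ?addbF. Qed.
Lemma wmulVw w : wmul (winv w) w = wone m.
Proof. by case: w => [[] a]; rewrite /wmul /winv /wone /= ?subrr ?addNr. Qed.
Lemma wmulwV w : wmul w (winv w) = wone m.
Proof. by case: w => [[] a]; rewrite /wmul /winv /wone /= ?subrr ?addrN. Qed.

Lemma eq_wmul w v u : (wmul w v == u) = (v == wmul (winv w) u).
Proof.
apply/eqP/eqP=> [<-|->]; first by rewrite wmulA wmulVw wmul1w.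
by rewrite wmulA wmulwV wmul1w.
Qed.
Lemma eq_wmulr w v u : (wmul w v == u) = (w == wmul u (winv v)).
Proof.
apply/eqP/eqP=> [<-|->]; first by rewrite -wmulA wmulwV wmulw1.
by rewrite -wmulA wmulVw wmulw1.
Qed.

Definition sr (c : bool) : dihW m := srefl (simple_ix m c).

Lemma sr_false : sr false = (true, 0).
Proof. by rewrite /sr /srefl /simple_ix /alpha_ix /=. Qed.

Lemma m1Z : ((m.-1)%:R : 'Z_m) = -1.
Proof.
apply/eqP; rewrite -subr_eq0 opprK natr1 prednK ?pchar_Zp //; lia.
Qed.

Lemma sr_true : sr true = (true, -1).
Proof.
rewrite /sr /srefl /simple_ix /beta_ix /= val_Zp_nat ?modn_small ?m1Z //; lia.
Qed.

Fixpoint T (b : bool) (k : nat) : dihW m :=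
  if k is k'.+1 then wmul (sr b) (T (~~ b) k') else wone m.

Lemma TE b k : T b k = (odd k, if b then - ((k.+1)./2)%:R else (k./2)%:R).
Proof.
elim: k b => [|k IH] b /=; first by case: b; rewrite /wone //= oppr0.
rewrite IH; case: b; rewrite ?sr_true ?sr_false /wmul /=; congr pair.
- rewrite -[1 *- k./2.+1]/(- (k./2.+1)%:R) -natr1; ring.
- by rewrite sub0r opprK.
Qed.

Lemma Zeq a b : ((a%:R : 'Z_m) == b%:R) = (a %% m == b %% m)%N.
Proof.
apply/eqP/eqP=> [/(congr1 val)|h]; first by rewrite /= !val_Zp_nat //; lia.
by apply: val_inj; rewrite /= !val_Zp_nat //; lia.
Qed.

Lemma ZeqN a b : (- (a%:R : 'Z_m) == b%:R) = ((a + b) %% m == 0)%N.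
Proof.
by rewrite eq_sym -subr_eq0 opprK -natrD -[0 : 'Z_m]/(0%N%:R) Zeq mod0n addnC.
Qed.

Lemma half_facts j : (j = 2 * j./2 + odd j)%N.
Proof. by rewrite -{1}(odd_double_half j) -muln2 addnC mulnC. Qed.

Lemma mod_small_eq x y : x = y %[mod m] -> (x < m)%N -> (y < m)%N -> x = y.
Proof. by move=> h hx hy; rewrite -(modn_small hx) -(modn_small hy). Qed.
Lemma mod_le_0 x : (x %% m = 0)%N -> (x <= m)%N -> x = 0%N \/ x = m.
Proof.
move=> h hx; case: (ltnP x m) => hx'; first by left; rewrite -(modn_small hx').
by right; apply/eqP; rewrite eqn_leq hx hx'.
Qed.

Lemma Tdist b b' j k : (k < j <= m)%N -> T b j != T b' k.
Proof.
move=> hkj; rewrite !TE xpair_eqE negb_and.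
apply/orP; case: (boolP (odd j == odd k)) => hp; [right|by left].
have hj := half_facts j; have hk := half_facts k.
have hj1 := half_facts j.+1; have hk1 := half_facts k.+1.
move/eqP: hp; rewrite -[odd j.+1]/(~~ odd j) -[odd k.+1]/(~~ odd k) in hj1 hk1.
move: hj hk hj1 hk1.
move: (odd j) (odd k) (j./2) (k./2) (j.+1./2) (k.+1./2) => oj ok a1 b1 c1 d1.
move=> hj hk hj1 hk1 hp.
case: b; case: b'; rewrite ?eqr_opp ?ZeqN ?Zeq; try rewrite eq_sym ZeqN.
all: move: hp hj hj1 hk hk1; case: oj; case: ok => //= _ hj hj1 hk hk1.
all: rewrite ?addn0 ?addn1 in hj hj1 hk hk1 *.
all: apply/eqP; move=> h.
all: first [ have := mod_small_eq h; lia | have := mod_le_0 h; lia ].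
Qed.

Lemma Tm : T false m = T true m.
Proof.
rewrite !TE; congr pair; apply/eqP; rewrite eq_sym ZeqN.
have h1 := half_facts m; have h2 := half_facts m.+1.
rewrite -[odd m.+1]/(~~ odd m) in h2; move: h1 h2; case: (odd m) => /= h1 h2.
  by apply/eqP; rewrite (_ : _ + _ = m)%N ?modnn //; lia.
by apply/eqP; rewrite (_ : _ + _ = m)%N ?modnn //; lia.
Qed.

Definition g (j : nat) : dihW m := (odd j, (j./2)%:R).

Lemma Tf_g k : T false k = g k.
Proof. by rewrite TE. Qed.

Lemma Tt_g k : (k <= m)%N -> T true k = g (2 * m - k).
Proof.
move=> hk; rewrite TE /g; congr pair.
  by rewrite oddB ?oddM /= ?addFb //; lia.
apply/eqP; rewrite ZeqN.
have h1 := half_facts k; have h2 := half_facts k.+1; have h3 := half_facts (2 * m - k).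
have ho : odd (2 * m - k) = odd k by rewrite oddB ?oddM /= ?addFb //; lia.
rewrite ho -[odd k.+1]/(~~ odd k) in h3 h2; move: h1 h2 h3; case: (odd k) => /= h1 h2 h3.
  by rewrite (_ : _ + _ = m)%N ?modnn //; lia.
by rewrite (_ : _ + _ = m)%N ?modnn //; lia.
Qed.

Lemma g_eq j (u : dihW m) : (j < 2 * m)%N -> (g j == u) = (j == 2 * val u.2 + u.1)%N.
Proof.
move=> hj; case: u => b a /=; rewrite /g xpair_eqE -{1}(natr_Zp a) Zeq.
have hc : (Zp_trunc m).+2 = m by apply: Zp_cast; lia.
have ha : (a < m)%N by have := ltn_ord a; lia.
have h1 := half_facts j.
rewrite (modn_small ha) modn_small; last by lia.
apply/andP/eqP.
  by case=> /eqP ho /eqP hh; rewrite -ho -hh {1}h1 //.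
move=> ->; rewrite oddD oddM /=.
by case: b; rewrite /= ?addn0 ?addn1 mul2n ?doubleK /= ?uphalf_double.
Qed.
End Group.

Section Alg.
Variables (m : nat) (hm : (3 <= m)%N) (Q : comUnitRingType) (act : dihW m -> Q -> Q).
Hypotheses (act_add : forall w a b, act w (a + b) = act w a + act w b)
  (act_mul : forall w a b, act w (a * b) = act w a * act w b)
  (act_one : forall w, act w 1 = 1)
  (act_id : forall a, act (wone m) a = a)
  (act_comp : forall w v a, act (wmul w v) a = act w (act v a)).
Variables (x : root_ix m -> Q).
Hypotheses (x_unit : forall j, x j \is a GRing.unit)
  (x_equiv : forall w j, act w (x j) = x (wact w j)).

Lemma act0 w : act w 0 = 0.
Proof. by apply: (addrI (act w 0)); rewrite -act_add !addr0. Qed.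
Lemma actN w a : act w (- a) = - act w a.
Proof. by apply/eqP; rewrite -addr_eq0 -act_add addNr act0. Qed.
Lemma actB w a b : act w (a - b) = act w a - act w b.
Proof. by rewrite act_add actN. Qed.
Lemma act_bool w (c : bool) : act w (c%:R) = c%:R.
Proof. by case: c; rewrite ?act_one ?act0. Qed.
Lemma act_y w j : act w (y_ x j) = y_ x (wact w j).
Proof.
rewrite /y_ -x_equiv; apply/esym/mulr1_eq; by rewrite -act_mul mulrV ?act_one.
Qed.
Lemma act_prod w (I : Type) (r : seq I) (P : pred I) (F : I -> Q) :
  act w (\prod_(i <- r | P i) F i) = \prod_(i <- r | P i) act w (F i).
Proof.
elim/big_rec2: _ => [|i a b _ <-]; first by rewrite act_one.
by rewrite act_mul.
Qed.

Notation QW := (QW m Q).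
Notation qwmul := (qwmul act).

Lemma qwmulE (F G : QW) u :
  qwmul F G u = \sum_w F w * act w (G (wmul (winv w) u)).
Proof.
rewrite ffunE; apply: eq_bigr => w _.
by rewrite (big_pred1 (wmul (winv w) u)) // => v; rewrite /= eq_wmul.
Qed.

Lemma sum_delta (a : dihW m) (H : dihW m -> Q) :
  \sum_w (w == a)%:R * H w = H a.
Proof.
rewrite (bigD1 a) //= eqxx mul1r big1 ?addr0 // => w /negbTE ->.
by rewrite mul0r.
Qed.

Lemma deltaE (a u : dihW m) : delta Q a u = (u == a)%:R.
Proof. by rewrite ffunE. Qed.
Lemma qwoneE u : qwone m Q u = (u == wone m)%:R.
Proof. by rewrite ffunE. Qed.

Lemma winv_refl (w : dihW m) : w.1 -> winv w = w.
Proof. by case: w => [[] a]. Qed.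
Lemma winv1 : winv (wone m) = wone m.
Proof. by rewrite /winv /wone /= oppr0. Qed.

Lemma Xop_mul j (G : QW) u :
  qwmul (Xop x j) G u =
  y_ x j * G u - y_ x j * act (srefl j) (G (wmul (srefl j) u)).
Proof.
rewrite qwmulE.
under eq_bigr => w _ do rewrite !ffunE mulrBr mulrBl.
rewrite sumrB; congr (_ - _); rewrite -[RHS]mulr1.
- under eq_bigr => i _ do rewrite -mulrA.
  by rewrite -mulr_sumr sum_delta winv1 wmul1w act_id mulr1.
- under eq_bigr => i _ do rewrite -mulrA.
  by rewrite -mulr_sumr sum_delta winv_refl // mulr1.
Qed.

Lemma delta_mul a b : qwmul (delta Q a) (delta Q b) = delta Q (wmul a b).
Proof.
apply/ffunP=> u; rewrite qwmulE.
under eq_bigr => w _ do rewrite !ffunE.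
rewrite sum_delta act_bool.
by rewrite ffunE [u == _]eq_sym [wmul a b == u]eq_wmul eq_sym.
Qed.

Notation X := (Xw act x).
Notation TT := (T m).
Notation s := (sr m).

Lemma deltawT b k : deltaw act b k = delta Q (TT b k).
Proof.
elim: k b => [|k IH] b //=.
have -> : deltaw act b k.+1 = qwmul (delta Q (s b)) (deltaw act (~~ b) k) by [].
by rewrite IH delta_mul.
Qed.

Lemma Xw_succ b k u : X b k.+1 u =
  y_ x (simple_ix m b) * X (~~ b) k u
  - y_ x (simple_ix m b) * act (s b) (X (~~ b) k (wmul (s b) u)).
Proof. exact: Xop_mul. Qed.

Lemma sr_refl c : (s c).1. Proof. by []. Qed.

Lemma eq_s1 c u : (wmul (s c) u == wone m) = (u == s c).
Proof. by rewrite eq_wmul winv_refl // wmulw1. Qed.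
Lemma eq_1s c u : (wmul u (s c) == wone m) = (u == s c).
Proof. by rewrite eq_wmulr winv_refl // wmul1w. Qed.
Lemma ssK c u : wmul (s c) (wmul (s c) u) = u.
Proof. by rewrite wmulA -{1}(winv_refl (sr_refl c)) wmulVw wmul1w. Qed.

Lemma Xw_anti k b u :
  X b k.+1 (wmul u (s (b (+) odd k))) = - X b k.+1 u.
Proof.
elim: k b u => [|k IH] b u.
  rewrite !Xw_succ /= !qwoneE !act_bool addbF.
  rewrite !eq_s1 eq_1s eq_wmulr wmulwV; ring.
rewrite Xw_succ [in RHS]Xw_succ.
have -> : b (+) odd k.+1 = ~~ b (+) odd k by rewrite /=; case: b; case: (odd k).
by rewrite wmulA !IH actN; ring.
Qed.

Lemma sT c b k : exists b' k', (k' <= k.+1)%N /\ wmul (s c) (TT b k) = TT b' k'.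
Proof.
case: (eqVneq b (~~ c)) => [->|hb].
  by exists c, k.+1; split => //=; rewrite negbK.
have -> : b = c by move: hb; case: b; case: c.
case: k => [|k].
  by exists c, 1%N; split => //=; rewrite wmulw1 wmulw1.
by exists (~~ c), k; split; [lia | rewrite /= ssK].
Qed.

Lemma Xw_supp i c u : (forall b k, (k <= i)%N -> u != TT b k) -> X c i u = 0.
Proof.
elim: i c u => [|i IH] c u hu.
  by rewrite /= qwoneE; have := hu c 0%N (leqnn 0); rewrite /= => /negbTE ->.
rewrite Xw_succ IH; last by move=> b k hk; apply: hu; apply: leqW.
rewrite IH ?act0 ?mulr0 ?subr0 //.
move=> b k hk; apply/eqP => he.
have [b' [k' [hk' he']]] := sT c b k.
have := hu b' k'; rewrite -he' -he ssK eqxx => /(_ _)/negP; apply => //.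
exact: leq_trans hk' _.
Qed.

Fixpoint Pv (b : bool) (i : nat) : Q :=
  if i is i'.+1 then - y_ x (simple_ix m b) * act (s b) (Pv (~~ b) i') else 1.

Lemma Xw_top i b : (i <= m)%N -> X b i (TT b i) = Pv b i.
Proof.
elim: i b => [|i IH] b hi; first by rewrite /= qwoneE eqxx.
rewrite Xw_succ Xw_supp; last by move=> b' k hk; apply: Tdist; lia.
rewrite /= ssK IH; [ring | lia].
Qed.

Lemma act_sign w i : act w ((-1) ^+ i) = (-1) ^+ i.
Proof. by elim: i => [|i IH]; rewrite ?act_one // exprS act_mul actN act_one IH. Qed.

Lemma Pv_prod i b : Pv b i =
  (-1) ^+ i * \prod_(k < i) act (TT b k) (y_ x (simple_ix m (b (+) odd k))).
Proof.
elim: i b => [|i IH] b; first by rewrite big_ord0 mulr1.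
rewrite /= IH act_mul act_sign act_prod big_ord_recl /= act_id addbF exprS.
under [in RHS]eq_bigr => k _ do rewrite add0n act_comp addbN -addNb.
ring.
Qed.


Lemma Zeq2 a b : ((a%:R : root_ix m) == b%:R) = (a %% (2 * m) == b %% (2 * m))%N.
Proof.
have h2 : (1 < 2 * m)%N by lia.
apply/eqP/eqP=> [/(congr1 val)|h]; first by rewrite /= !val_Zp_nat.
by apply: val_inj; rewrite /= !val_Zp_nat.
Qed.

Lemma wact_T k : wact (TT false k) (simple_ix m (odd k)) = (k%:R : root_ix m).
Proof.
have hm1 : (1 < m)%N by lia.
have hk := half_facts k.
rewrite (TE hm) /wact /=; move: hk; case: (odd k) => /= hk.
  apply/eqP; rewrite addrC subr_eq -natrD Zeq2 /= val_Zp_nat //.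
    by rewrite muln_modr modnDml (_ : (k + m.-1 = 2 * k./2 + m)%N) //; lia.
apply/eqP; rewrite /alpha_ix add0r Zeq2 /= val_Zp_nat //.
by rewrite muln_modr modn_mod (_ : (2 * k./2 = k)%N) //; lia.
Qed.

Lemma ySigmaE : ySigmaPlus x = \prod_(k < m) y_ x k%:R.
Proof.
have h2 : (1 < 2 * m)%N by lia.
have hle : (m <= (Zp_trunc (2 * m)).+2)%N by rewrite Zp_cast //; lia.
rewrite (big_ord_widen _ (fun k => y_ x k%:R) hle).
by apply: eq_bigr => j _; rewrite natr_Zp.
Qed.

Lemma Pv_top : Pv false m = (-1) ^+ m * ySigmaPlus x.
Proof.
rewrite Pv_prod ySigmaE; congr (_ * _); apply: eq_bigr => k _.
by rewrite act_y /= wact_T.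
Qed.

Lemma anti_unique (Z : QW) :
  (forall u, Z (wmul u (s false)) = - Z u) ->
  (forall u, Z (wmul u (s true)) = - Z u) ->
  forall u, Z u = (-1) ^+ u.1 * Z (wone m).
Proof.
move=> h1 h2.
have hr : forall r : nat, Z (false, r%:R) = Z (wone m).
  elim => [|r IH]; first by [].
  have -> : (false, r.+1%:R) = wmul (wmul (false, r%:R) (s false)) (s true).
    by rewrite (sr_true hm) sr_false /wmul /=; congr pair; rewrite -natr1; ring.
  by rewrite h2 h1 opprK.
move=> [b a]; rewrite -(natr_Zp a); case: b.
  rewrite (_ : (true, _) = wmul (false, (val a)%:R) (s false)).
    by rewrite h1 hr /= expr1 mulN1r.
  by rewrite sr_false /wmul /= addr0.
by rewrite hr /= expr0 mul1r.
Qed.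

Notation gg := (g m).

Lemma count u : \sum_(0 <= j < 2 * m) ((u == gg j)%:R : Q) = 1.
Proof.
have hc : (Zp_trunc m).+2 = m by apply: Zp_cast; lia.
have hu : (2 * val u.2 + u.1 < 2 * m)%N.
  have h := ltn_ord u.2; have hv : (val u.2 < m)%N by change (nat_of_ord u.2 < m)%N; lia.
  by case: (u.1); lia.
rewrite big_mkord (bigD1 (Ordinal hu)) //= eq_sym g_eq // eqxx big1 ?addr0 //.
move=> j hj; rewrite eq_sym g_eq //; case: eqP => // hj'.
by case/eqP: hj; apply: val_inj.
Qed.

Lemma sign_shift i (u w : dihW m) : (i <= m)%N -> w.1 = odd (m - i) ->
  (-1) ^+ i * ((u == w)%:R : Q) = (-1) ^+ m * ((-1) ^+ u.1 * (u == w)%:R).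
Proof.
move=> hi hw; case: eqP => [->|_]; last by rewrite !mulr0.
rewrite hw !mulr1 -exprD -signr_odd [RHS]/= -[RHS]signr_odd oddD oddB //.
by case: (odd m); case: (odd i).
Qed.

Lemma Cval' u : (u == wone m)%:R + ((u == gg m)%:R +
  \sum_(1 <= i < m) ((u == gg (m - i))%:R + (u == gg (m + i))%:R)) =
  \sum_(0 <= j < 2 * m) ((u == gg j)%:R : Q).
Proof.
have h1 : (0 < m)%N by lia.
have h2 : (m < 2 * m)%N by lia.
rewrite (@big_cat_nat _ _ _ m 0 (2 * m) _ _ (leq0n m) (ltnW h2)) /=.
rewrite (big_ltn h1) (big_ltn h2).
have E1 : \sum_(1 <= i < m) ((u == gg i)%:R : Q) =
    \sum_(1 <= i < m) (u == gg (m - i))%:R.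
  rewrite big_nat_rev; apply: eq_bigr => i _.
  by rewrite (_ : (1 + m - i.+1 = m - i)%N) //; lia.
have E2 : \sum_(m.+1 <= i < 2 * m) ((u == gg i)%:R : Q) =
    \sum_(1 <= i < m) (u == gg (m + i))%:R.
  rewrite -[m.+1]add1n big_addn (_ : (2 * m - m = m)%N); last by lia.
  by apply: eq_bigr => i _; rewrite addnC.
rewrite E1 E2 big_split /=.
have -> : gg 0 = wone m by [].
ring.
Qed.

Lemma Cval u : (u == gg m)%:R +
  \sum_(1 <= i < m) ((u == gg (m - i))%:R + (u == gg (m + i))%:R) =
  1 - ((u == wone m)%:R : Q).
Proof. by apply/eqP; rewrite eq_sym subr_eq addrC Cval' count. Qed.

Lemma T1 b k : (TT b k).1 = odd k.
Proof. by rewrite (TE hm). Qed.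

Lemma Mval b u : (deltaw act b m + Dsum act) u =
  (-1) ^+ m * ((-1) ^+ u.1 - (u == wone m)%:R).
Proof.
have hTm : TT b m = gg m by case: b; rewrite ?Tf_g // -(Tm hm) Tf_g.
rewrite ffunE sum_ffunE deltawT deltaE hTm.
under eq_bigr => i _ do rewrite !ffunE !deltawT !deltaE.
rewrite (@eq_big_nat _ _ _ 1 m _ (fun i => (-1) ^+ m * ((-1) ^+ u.1 *
   ((u == gg (m - i))%:R + (u == gg (m + i))%:R)))); last first.
  move=> i /andP[hi1 hi2].
  rewrite mulrDr !(@sign_shift i) ?T1 //; try lia.
  rewrite (Tf_g hm) (Tt_g hm) ?leq_subr // (_ : (2 * m - (m - i) = m + i)%N); last by lia.
  by rewrite -!mulrDr.
rewrite -!mulr_sumr.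
have := @sign_shift 0 u (gg m) (leq0n m); rewrite expr0 mul1r subn0 => -> //.
rewrite -mulrDr -mulrDr Cval; congr (_ * _).
by case: (eqVneq u (wone m)) => [->|_]; rewrite /= ?expr0 ?subrr ?mulr0 ?subr0 ?mulr1.
Qed.

Lemma Xw_anti' c i u : (0 < i)%N -> X c i (wmul u (s (c (+) ~~ odd i))) = - X c i u.
Proof.
case: i => // i _; have := Xw_anti i c u.
by rewrite [odd i.+1]/= negbK.
Qed.

Definition sgnf : QW := [ffun u : dihW m => (-1) ^+ (u.1 : bool)].

Section Kappa.
Variable kappa : bool -> nat -> Q.
Hypothesis hkappa : X false m - X true m =
     \sum_(1 <= i < m.-1)
        (qscale (kappa false i) (X false i)
         - qscale (kappa true i) (X true i)).

Definition SA b := \sum_(1 <= i < m.-1)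
   qscale ((-1) ^+ (m - i) * kappa (b (+) odd i (+) odd m) i)
          (X (b (+) odd i (+) odd m) i).

Lemma AB : X false m - SA false = X true m - SA true.
Proof.
have E : forall a b c d : QW, (a - b) - (c - d) = (a - c) - (b - d).
  by move=> *; rewrite !opprD !opprK addrACA.
apply/eqP; rewrite -subr_eq0 E hkappa.
rewrite /SA -sumrB subr_eq0; apply/eqP/eq_big_nat => i /andP [h1 h2].
apply/ffunP => u; rewrite !ffunE -signr_odd oddB; last by lia.
by case: (odd i); case: (odd m); rewrite /= ?expr0 ?expr1 ?mul1r ?mulN1r; ring.
Qed.

Lemma A_anti b u : (X b m - SA b) (wmul u (s (b (+) ~~ odd m))) =
   - (X b m - SA b) u.
Proof.
rewrite !ffunE !sum_ffunE Xw_anti' ?opprB; last by lia.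
rewrite addrC; congr (_ + _); apply/eqP; rewrite eqr_oppLR -sumrN; apply/eqP.
apply: eq_big_nat => i /andP [h1 h2]; rewrite !ffunE.
have -> : b (+) ~~ odd m = (b (+) odd i (+) odd m) (+) ~~ odd i.
  by case: b; case: (odd i); case: (odd m).
by rewrite Xw_anti' // mulrN.
Qed.

Lemma main_gen b : X b m = SA b + qscale (ySigmaPlus x) sgnf.
Proof.
set A := X false m - SA false.
have hA c : X c m - SA c = A by case: c => //; rewrite /A AB.
set Z := A - qscale (ySigmaPlus x) sgnf.
have hZ c u : Z (wmul u (s c)) = - Z u.
  have := A_anti (c (+) ~~ odd m) u.
  rewrite hA (_ : c (+) ~~ odd m (+) ~~ odd m = c); last first.
    by case: c; case: (odd m).
  rewrite /Z !ffunE => ->; rewrite /wmul /= addbT.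
  by case: (u.1); rewrite /= ?expr0 ?expr1; ring.
have hZ0 : Z (TT false m) = 0.
  rewrite /Z /A !ffunE sum_ffunE Xw_top // Pv_top big_nat_cond big1; last first.
    move=> i /andP [/andP [h1 h2] _]; rewrite ffunE Xw_supp ?mulr0 //.
    by move=> b0 k hk; apply: (Tdist hm); lia.
  by rewrite subr0 T1 signr_odd mulrC subrr.
have hZ1 : Z (wone m) = 0.
  have := anti_unique (hZ false) (hZ true) (TT false m).
  rewrite hZ0 => h; rewrite -(signrMK (TT false m).1 (Z (wone m))) -h mulr0 //.
have -> : X b m = SA b + A by rewrite -(hA b) addrC subrK.
congr (_ + _); apply/eqP; rewrite -subr_eq0; apply/eqP/ffunP => u.
by rewrite [RHS]ffunE (anti_unique (hZ false) (hZ true) u) hZ1 mulr0.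
Qed.

End Kappa.

End Alg.

Theorem corollary6p2 (m : nat) (hm : (3 <= m)%N)
  (Q : comUnitRingType) (act : dihW m -> Q -> Q)
  (act_add : forall w a b, act w (a + b) = act w a + act w b)
  (act_mul : forall w a b, act w (a * b) = act w a * act w b)
  (act_one : forall w, act w 1 = 1)
  (act_id : forall a, act (wone m) a = a)
  (act_comp : forall w v a, act (wmul w v) a = act w (act v a))
  (x : root_ix m -> Q)
  (x_unit : forall j, x j \is a GRing.unit)
  (x_equiv : forall w j, act w (x j) = x (wact w j))
  (kappa : bool -> nat -> Q)
  (hkappa : Xw act x false m - Xw act x true m =
     \sum_(1 <= i < m.-1)
        (qscale (kappa false i) (Xw act x false i)
         - qscale (kappa true i) (Xw act x true i))) :
  (~~ odd m ->
     Xw act x false m =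
       \sum_(1 <= i < m.-1)
          qscale ((-1) ^+ (m - i) * kappa (odd i) i) (Xw act x (odd i) i)
       + qscale (ySigmaPlus x)
           (deltaw act false m + Dsum act + qwone m Q)
   /\
     Xw act x true m =
       \sum_(1 <= i < m.-1)
          qscale ((-1) ^+ (m - i) * kappa (~~ odd i) i) (Xw act x (~~ odd i) i)
       + qscale (ySigmaPlus x)
           (deltaw act true m + Dsum act + qwone m Q))
  /\
  (odd m ->
     Xw act x false m =
       \sum_(1 <= i < m.-1)
          qscale ((-1) ^+ (m - i) * kappa (~~ odd i) i) (Xw act x (~~ odd i) i)
       - qscale (ySigmaPlus x)
           (deltaw act false m + Dsum act - qwone m Q)
   /\
     Xw act x true m =
       \sum_(1 <= i < m.-1)
          qscale ((-1) ^+ (m - i) * kappa (odd i) i) (Xw act x (odd i) i)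
       - qscale (ySigmaPlus x)
           (deltaw act true m + Dsum act - qwone m Q)).

Proof.
have MG := main_gen hm act_add act_mul act_one act_id act_comp x_unit x_equiv hkappa.
have MV b u : deltaw act b m u + Dsum act u =
    (-1) ^+ m * ((-1) ^+ u.1 - (u == wone m)%:R).
  by rewrite -(Mval hm act_add act_one b u) ffunE.
split => hodd; split.
- rewrite MG /SA; congr (_ + _).
    by apply: eq_bigr => i _; rewrite (negbTE hodd) /= addbF.
  apply/ffunP => u; rewrite !ffunE MV -[(-1) ^+ m]signr_odd (negbTE hodd) expr0 mul1r.
  by rewrite subrK.
- rewrite MG /SA; congr (_ + _).
    by apply: eq_bigr => i _; rewrite (negbTE hodd) /= addbF.
  apply/ffunP => u; rewrite !ffunE MV -[(-1) ^+ m]signr_odd (negbTE hodd) expr0 mul1r.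
  by rewrite subrK.
- rewrite MG /SA; congr (_ + _).
    by apply: eq_bigr => i _; rewrite hodd /= addbT.
  apply/ffunP => u; rewrite !ffunE MV -[(-1) ^+ m]signr_odd hodd expr1; ring.
- rewrite MG /SA; congr (_ + _).
    by apply: eq_bigr => i _; rewrite hodd /= addbT negbK.
  apply/ffunP => u; rewrite !ffunE MV -[(-1) ^+ m]signr_odd hodd expr1; ring.
Qed.
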